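(* Suppose the Assumption below holds. Then there exists a constant $\gamma_h\ge0$ such that $\sup_{\mathbf x\in\Omega}\|\mathcal H(\mathbf x)\|\le\gamma_h$.
   Context: Let $f,c_1,\dots,c_m:\mathbb R^n\to\mathbb R$ be twice continuously differentiable and $\Omega=\{\mathbf x\in\mathbb R^n: c_i(\mathbf x)=0,\ i=1,\dots,m\}$. Write $\nabla\mathbf c(\mathbf x)=[\nabla c_1(\mathbf x),\dots,\nabla c_m(\mathbf x)]$; $\mathcal P_{\mathbf x}$ is the orthogonal projection onto $\{\mathbf v:\nabla\mathbf c(\mathbf x)^\top\mathbf v=\mathbf 0\}$. Lagrangian $\mathcal L(\mathbf x,\boldsymbol\lambda)=f(\mathbf x)-\sum_i\lambda_ic_i(\mathbf x)$; $\boldsymbol\lambda^\star(\mathbf x)\in\arg\min_{\boldsymbol\lambda}\|\nabla_{\mathbf x}\mathcal L(\mathbf x,\boldsymbol\lambda)\|$; $\mathcal H(\mathbf x)=\mathcal P_{\mathbf x}^\top\nabla^2_{\mathbf x\mathbf x}\mathcal L(\mathbf x,\boldsymbol\lambda^\star(\mathbf x))\mathcal P_{\mathbf x}$. Matrix norms are spectral. Assumption: (a) $\nabla f,\nabla^2 f,\nabla c_i,\nabla^2 c_i$ are Lipschitz over $\Omega$; (b) $\sup_{\Omega}\|\nabla f\|\le\gamma_{f,1}$, $\sup_\Omega\|\nabla^2 f\|\le\gamma_{f,2}$, $\sup_\Omega\|\nabla c_i\|\le\gamma_{c_i,1}$, $\sup_\Omega\|\nabla^2c_i\|\le\gamma_{c_i,2}$;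 (c) there is $\sigma_0>0$ with $\sigma_{\min}(\nabla\mathbf c(\mathbf x))\ge\sigma_0$ on $\Omega$. *)

(* Defs.v *)
(* Points of R^n are row vectors 'rV[R]_n
   (the domain of the functions); gradients, multipliers and other algebraic
   vectors are column vectors 'cV[R]_n. *)
From HB Require Import structures.
From mathcomp Require Import all_boot all_order all_algebra.
From mathcomp Require Import all_classical all_reals all_analysis.
Set Implicit Arguments. Unset Strict Implicit. Unset Printing Implicit Defensive.
Import Order.TTheory GRing.Theory Num.Theory.
Import numFieldNormedType.Exports.
Local Open Scope classical_set_scope.
Local Open Scope ring_scope.

Section Defs.
Variable R : realType.

Definition enorm (p q : nat) (v : 'M[R]_(p, q)) : R :=
  Num.sqrt (\sum_(i < p) \sum_(j < q) v i j ^+ 2).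

Definition specnorm (p q : nat) (A : 'M[R]_(p, q)) : R :=
  sup [set enorm (A *m v) | v in [set v : 'cV[R]_q | enorm v <= 1]].

Definition sigma_min (p q : nat) (A : 'M[R]_(p, q)) : R :=
  inf [set enorm (A *m w) | w in [set w : 'cV[R]_q | enorm w = 1]].

Definition ebasis (n : nat) (i : 'I_n) : 'rV[R]_n := delta_mx 0 i.

Definition grad (n : nat) (f : 'rV[R]_n -> R) (x : 'rV[R]_n) : 'cV[R]_n :=
  \col_i derive f x (ebasis i).

Definition hess (n : nat) (f : 'rV[R]_n -> R) (x : 'rV[R]_n) : 'M[R]_n :=
  \matrix_(i, j) derive (fun y => derive f y (ebasis i)) x (ebasis j).

Definition C2 (n : nat) (f : 'rV[R]_n -> R) : Prop :=
  (forall x, differentiable f x) /\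
  (forall i x, differentiable (fun y => derive f y (ebasis i)) x) /\
  (forall i j, continuous (fun x => hess f x i j)).

Definition gradc (n m : nat) (c : 'I_m -> 'rV[R]_n -> R) (x : 'rV[R]_n)
  : 'M[R]_(n, m) := \matrix_(k, i) grad (c i) x k 0.

Definition feas (n m : nat) (c : 'I_m -> 'rV[R]_n -> R) : set 'rV[R]_n :=
  [set x | forall i, c i x = 0].

Definition lagr (n m : nat) (f : 'rV[R]_n -> R) (c : 'I_m -> 'rV[R]_n -> R)
  (x : 'rV[R]_n) (lam : 'cV[R]_m) : R :=
  f x - \sum_(i < m) lam i 0 * c i x.

Definition gradL n m f c (x : 'rV[R]_n) (lam : 'cV[R]_m) : 'cV[R]_n :=
  grad (fun y => @lagr n m f c y lam) x.

Definition hessL n m f c (x : 'rV[R]_n) (lam : 'cV[R]_m) : 'M[R]_n :=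
  hess (fun y => @lagr n m f c y lam) x.

Definition is_orth_proj_kerT (n m : nat) (A : 'M[R]_(n, m)) (P : 'M[R]_n) : Prop :=
  (forall v : 'cV[R]_n, A^T *m (P *m v) = 0) /\
  (forall v w : 'cV[R]_n, A^T *m w = 0 -> (v - P *m v)^T *m w = 0).

Definition lipschitz_vec n p (S : set 'rV[R]_n) (g : 'rV[R]_n -> 'cV[R]_p) : Prop :=
  exists L : R, forall x y, S x -> S y -> enorm (g x - g y) <= L * enorm (x - y).

Definition lipschitz_mat n p (S : set 'rV[R]_n) (g : 'rV[R]_n -> 'M[R]_p) : Prop :=
  exists L : R, forall x y, S x -> S y -> specnorm (g x - g y) <= L * enorm (x - y).

End Defs.

(* Main.v *)
Require Import Defs.
From HB Require Import structures.
From mathcomp Require Import all_boot all_order all_algebra.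
From mathcomp Require Import all_classical all_reals all_analysis.
From mathcomp Require Import ring lra.
Import Order.TTheory GRing.Theory Num.Theory.
Import numFieldNormedType.Exports.
Local Open Scope classical_set_scope.
Local Open Scope ring_scope.

Set Implicit Arguments. Unset Strict Implicit.
Section S.
Variable R : realType.

Lemma single_le p q (F : 'I_p -> 'I_q -> R) i j :
  (forall i j, 0 <= F i j) -> F i j <= \sum_(i < p) \sum_(j < q) F i j.
Proof.
move=> F0; rewrite (bigD1 i) //= (bigD1 j) //= -addrA lerDl.
apply: addr_ge0; first by apply: sumr_ge0 => k _; exact: F0.
by apply: sumr_ge0 => k _; apply: sumr_ge0 => l _; exact: F0.
Qed.

Lemma enorm_ge0 p q (v : 'M[R]_(p, q)) : 0 <= enorm v.
Proof. exact: sqrtr_ge0. Qed.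

Lemma sumsq_ge0 p q (v : 'M[R]_(p, q)) : 0 <= \sum_(i < p) \sum_(j < q) v i j ^+ 2.
Proof. by apply: sumr_ge0 => i _; apply: sumr_ge0 => j _; exact: sqr_ge0. Qed.

Lemma enorm_sq p q (v : 'M[R]_(p, q)) :
  enorm v ^+ 2 = \sum_(i < p) \sum_(j < q) v i j ^+ 2.
Proof. by rewrite sqr_sqrtr // sumsq_ge0. Qed.

Lemma entry_le_enorm p q (v : 'M[R]_(p, q)) i j : `|v i j| <= enorm v.
Proof.
rewrite -sqrtr_sqr /enorm ler_sqrt ?sumsq_ge0 //.
by apply: (@single_le p q (fun i j => v i j ^+ 2)) => *; exact: sqr_ge0.
Qed.

Lemma enorm_le_abssum p q (v : 'M[R]_(p, q)) :
  enorm v <= \sum_(i < p) \sum_(j < q) `|v i j|.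
Proof.
set S := \sum_(i < p) \sum_(j < q) `|v i j|.
have S0 : 0 <= S by apply: sumr_ge0 => i _; apply: sumr_ge0.
rewrite -(ger0_norm S0) -sqrtr_sqr /enorm ler_sqrt ?sqr_ge0 //.
apply: (@le_trans _ _ (\sum_(i < p) \sum_(j < q) `|v i j| * S)).
  apply: ler_sum => i _; apply: ler_sum => j _.
  rewrite -real_normK ?num_real // expr2 ler_wpM2l //.
  exact: (@single_le p q (fun i j => `|v i j|)).
by rewrite expr2; under eq_bigr do rewrite -mulr_suml; rewrite -mulr_suml.
Qed.

Lemma enorm0 p q : enorm (0 : 'M[R]_(p, q)) = 0.
Proof.
rewrite /enorm big1 ?sqrtr0 // => i _; rewrite big1 // => j _.
by rewrite mxE expr0n.
Qed.

Lemma enorm_delta q (k : 'I_q) : enorm (delta_mx k 0 : 'cV[R]_q) = 1.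
Proof.
rewrite /enorm (bigD1 k) //= big_ord1 mxE !eqxx /= expr1n big1 ?addr0 ?sqrtr1 //.
by move=> i ik; rewrite big_ord1 mxE (negbTE ik) /= expr0n.
Qed.

Lemma mulmx_le p q (A : 'M[R]_(p, q)) (v : 'cV[R]_q) :
  enorm v <= 1 -> enorm (A *m v) <= \sum_(i < p) \sum_(k < q) `|A i k|.
Proof.
move=> v1; apply: (le_trans (enorm_le_abssum _)).
apply: ler_sum => i _; rewrite big_ord1 mxE.
apply: le_trans; first exact: ler_norm_sum.
apply: ler_sum => k _; rewrite normrM.
rewrite -[X in _ <= X]mulr1 ler_wpM2l //.
apply: (le_trans (entry_le_enorm _ _ _)) v1.
Qed.

Lemma spec_upper p q (A : 'M[R]_(p, q)) (v : 'cV[R]_q) :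
  enorm v <= 1 -> enorm (A *m v) <= specnorm A.
Proof.
move=> v1; apply: sup_upper_bound; last by exists v.
split; first by exists (enorm (A *m v)), v.
exists (\sum_(i < p) \sum_(k < q) `|A i k|) => _ [w w1 <-].
exact: mulmx_le.
Qed.

Lemma entry_le_spec p q (A : 'M[R]_(p, q)) i k : `|A i k| <= specnorm A.
Proof.
have -> : A i k = col k A i 0 by rewrite mxE.
apply: (le_trans (entry_le_enorm _ _ _)).
by rewrite colE; apply: spec_upper; rewrite enorm_delta.
Qed.

Lemma spec_le p q (A : 'M[R]_(p, q)) a :
  (forall i k, `|A i k| <= a) -> specnorm A <= (p * q)%:R * a.
Proof.
move=> Ha; apply: ge_sup.
  exists (enorm (A *m (0 : 'cV[R]_q))); exists 0 => //; by rewrite /mkset enorm0.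
move=> _ [w w1 <-]; apply: (le_trans (mulmx_le _ w1)).
apply: (@le_trans _ _ (\sum_(i < p) \sum_(k < q) a)).
  by apply: ler_sum => i _; apply: ler_sum => k _.
under eq_bigr do rewrite sumr_const card_ord.
by rewrite sumr_const card_ord -mulrnA mulr_natl mulnC. Qed.

Lemma enorm_scale p q k (v : 'M[R]_(p, q)) : enorm (k *: v) = `|k| * enorm v.
Proof.
rewrite /enorm -sqrtr_sqr -sqrtrM ?sqr_ge0 //; congr Num.sqrt.
rewrite mulr_sumr; apply: eq_bigr => i _; rewrite mulr_sumr.
by apply: eq_bigr => j _; rewrite mxE exprMn.
Qed.

Lemma sig_lemma p q (A : 'M[R]_(p, q)) s (w : 'cV[R]_q) :
  0 < s -> s <= sigma_min A -> s * enorm w <= enorm (A *m w).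
Proof.
move=> s0 sA.
have [e0|ne] := eqVneq (enorm w) 0; first by rewrite e0 mulr0 enorm_ge0.
have wpos : 0 < enorm w by rewrite lt_neqAle eq_sym ne enorm_ge0.
have H : sigma_min A <= enorm (A *m ((enorm w)^-1 *: w)).
  apply: ge_inf; last by exists ((enorm w)^-1 *: w) => //; rewrite /mkset
    enorm_scale ger0_norm ?invr_ge0 ?enorm_ge0 // mulVf.
  by exists 0 => _ [w' _ <-]; exact: enorm_ge0.
move: H; rewrite -scalemxAr enorm_scale ger0_norm ?invr_ge0 ?enorm_ge0 // => H.
have := ler_wpM2r (ltW wpos) (le_trans sA H).
by rewrite mulrAC mulVf ?mul1r.
Qed.

Lemma proj_le p q (A : 'M[R]_(p, q)) P (v : 'cV[R]_p) :
  is_orth_proj_kerT A P -> enorm (P *m v) <= enorm v.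
Proof.
case=> h1 h2; have := h2 v (P *m v) (h1 v).
set u := P *m v; clearbody u.
move/matrixP/(_ 0 0); rewrite !mxE => E.
rewrite /enorm ler_sqrt ?sumsq_ge0 // -subr_ge0 -sumrB.
have -> : \sum_(i < p) (\sum_(j < 1) v i j ^+ 2 - \sum_(j < 1) u i j ^+ 2) =
  \sum_(i < p) (v i 0 - u i 0) ^+ 2 +
  2 * \sum_(j < p) (v - u)^T 0 j * u j 0.
  rewrite mulr_sumr -big_split; apply: eq_bigr => i _; rewrite !big_ord1 !mxE.
  rewrite /=; ring.
by rewrite E mulr0 addr0; apply: sumr_ge0 => i _; exact: sqr_ge0.
Qed.

Lemma lam_lemma p q (y z : 'M[R]_(p, q)) a :
  enorm (y - z) <= enorm y -> enorm y <= a -> enorm z <= 2 * `|a|.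
Proof.
move=> h1 h2.
have a0 : 0 <= 2 * `|a| by rewrite mulr_ge0.
rewrite -(ger0_norm a0) -sqrtr_sqr /enorm ler_sqrt ?sqr_ge0 //.
apply: (@le_trans _ _ (\sum_(i < p) \sum_(j < q)
   (2 * y i j ^+ 2 + 2 * (y - z) i j ^+ 2))).
  apply: ler_sum => i _; apply: ler_sum => j _; rewrite !mxE.
  set b := y i j; set c := z i j.
  have : 0 <= (b + (b - c)) ^+ 2 by exact: sqr_ge0.
  nra.
have -> : \sum_(i < p) \sum_(j < q) (2 * y i j ^+ 2 + 2 * (y - z) i j ^+ 2) =
  2 * (\sum_(i < p) \sum_(j < q) y i j ^+ 2) +
  2 * (\sum_(i < p) \sum_(j < q) (y - z) i j ^+ 2).
  rewrite !mulr_sumr -big_split; apply: eq_bigr => i _.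
  by rewrite !mulr_sumr -big_split.
rewrite -!enorm_sq.
have e0 := enorm_ge0 y; have e1 := enorm_ge0 (y - z).
have : enorm y <= `|a| by apply: le_trans h2 (ler_norm _).
nra.
Qed.
Lemma derive_lin n m (g : 'rV[R]_n -> R) (h : 'I_m -> 'rV[R]_n -> R)
  (lam : 'I_m -> R) x v :
  derivable g x v -> (forall i, derivable (h i) x v) ->
  derive (fun y => g y - \sum_(i < m) lam i * h i y) x v =
  derive g x v - \sum_(i < m) lam i * derive (h i) x v.
Proof.
move=> dg dh.
have -> : (fun y => g y - \sum_(i < m) lam i * h i y) =
   g - \sum_(i < m) (lam i \*: h i).
  by apply: funext => y; rewrite !fctE fct_sumE.
rewrite deriveB //; last by apply: derivable_sum => i; exact: derivableZ.
rewrite derive_sum; last by move=> i; exact: derivableZ.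
congr (_ - _); apply: eq_bigr => i _; rewrite deriveZ //.
Qed.
End S.
Unset Implicit Arguments.


Theorem lemma3 (R : realType) (n m : nat)
  (f : 'rV[R]_n -> R) (c : 'I_m -> 'rV[R]_n -> R)
  (gf1 gf2 sigma0 : R) (gc1 gc2 : 'I_m -> R)
  (lamstar : 'rV[R]_n -> 'cV[R]_m) (P : 'rV[R]_n -> 'M[R]_n) :
  C2 f -> (forall i, C2 (c i)) ->
  (* (a) Lipschitz continuity over Omega *)
  lipschitz_vec (feas c) (grad f) ->
  lipschitz_mat (feas c) (hess f) ->
  (forall i, lipschitz_vec (feas c) (grad (c i))) ->
  (forall i, lipschitz_mat (feas c) (hess (c i))) ->
  (* (b) uniform bounds over Omega *)
  (forall x, feas c x -> enorm (grad f x) <= gf1) ->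
  (forall x, feas c x -> specnorm (hess f x) <= gf2) ->
  (forall i x, feas c x -> enorm (grad (c i) x) <= gc1 i) ->
  (forall i x, feas c x -> specnorm (hess (c i) x) <= gc2 i) ->
  (* (c) uniform lower bound on the smallest singular value *)
  0 < sigma0 ->
  (forall x, feas c x -> (0 < m)%N -> sigma0 <= sigma_min (gradc c x)) ->
  (* lambda*(x) is a least-squares multiplier *)
  (forall x, feas c x -> forall mu : 'cV[R]_m,
     enorm (gradL f c x (lamstar x)) <= enorm (gradL f c x mu)) ->
  (* P_x is the orthogonal projection onto {v | grad c(x)^T v = 0} *)
  (forall x, is_orth_proj_kerT (gradc c x) (P x)) ->
  exists gammah : R, 0 <= gammah /\
    forall x, feas c x ->
      specnorm ((P x)^T *m hessL f c x (lamstar x) *m P x) <= gammah.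
Proof.
move=> C2f C2c _ _ _ _ bgf bhf bgc bhc s0 hsig hlam hP.
set K := 2 * `|gf1| / sigma0.
set B := `|gf2| + \sum_(i < m) K * `|gc2 i|.
have K0 : 0 <= K by rewrite /K divr_ge0 ?mulr_ge0 // ltW.
have B0 : 0 <= B by rewrite /B addr_ge0 // sumr_ge0 // => i _; rewrite mulr_ge0.
exists ((n * n)%:R * ((n * n)%:R * B)); split.
  by rewrite !mulr_ge0.
move=> x fx.
set lam := lamstar x.
have gradLE : forall mu, gradL f c x mu = grad f x - gradc c x *m mu.
  move=> mu; apply/matrixP => k j; rewrite (ord1 j) /gradL /grad /lagr !mxE.
  have := @derive_lin R n m f c (fun i => mu i 0) x (ebasis R k).
  rewrite /= => ->.
  - congr (_ - _); apply: eq_bigr => i _; rewrite !mxE mulrC //.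
  - exact: diff_derivable (C2f.1 x).
  - by move=> i; exact: diff_derivable ((C2c i).1 x).
have Az : enorm (gradc c x *m lam) <= 2 * `|gf1|.
  apply: (lam_lemma (y := grad f x)) (bgf x fx).
  have := hlam x fx 0; rewrite [gradL _ _ _ 0]gradLE mulmx0 subr0 gradLE.
  exact.
have lamb : forall i, `|lam i 0| <= K.
  move=> i; have m0 : (0 < m)%N by apply: leq_ltn_trans (leq0n i) (ltn_ord i).
  have H := sig_lemma lam s0 (hsig x fx m0).
  rewrite /K ler_pdivlMr // mulrC.
  apply: le_trans (le_trans H Az).
  by apply: ler_wpM2l; [exact: ltW | exact: entry_le_enorm].
have hessLE : forall a b, hessL f c x lam a b =
    hess f x a b - \sum_(i < m) lam i 0 * hess (c i) x a b.
  move=> a b; rewrite /hessL /hess !mxE /lagr.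
  have -> : (fun y => derive (fun y0 => f y0 - \sum_(i < m) lam i 0 * c i y0)
      y (ebasis R a)) = (fun y => derive f y (ebasis R a) -
      \sum_(i < m) lam i 0 * derive (c i) y (ebasis R a)).
    apply: funext => y.
    have := @derive_lin R n m f c (fun i => lam i 0) y (ebasis R a).
    rewrite /= => -> //.
    - exact: diff_derivable (C2f.1 y).
    - by move=> i; exact: diff_derivable ((C2c i).1 y).
  have := @derive_lin R n m (fun y => derive f y (ebasis R a))
    (fun i y => derive (c i) y (ebasis R a)) (fun i => lam i 0) x (ebasis R b).
  rewrite /= => -> //.
  - congr (_ - _); apply: eq_bigr => i _; rewrite mxE //.
  - exact: diff_derivable (C2f.2.1 a x).
  - by move=> i; exact: diff_derivable ((C2c i).2.1 a x).
have Mb : forall a b, `|hessL f c x lam a b| <= B.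
  move=> a b; rewrite hessLE; apply: le_trans (ler_normB _ _) _.
  apply: lerD.
    apply: le_trans (entry_le_spec _ a b) _.
    exact: le_trans (bhf x fx) (ler_norm _).
  apply: le_trans; first exact: ler_norm_sum.
  apply: ler_sum => i _; rewrite normrM; apply: ler_pM => //.
  apply: le_trans (entry_le_spec _ a b) _.
  exact: le_trans (bhc i x fx) (ler_norm _).
have Pb : forall a b, `|P x a b| <= 1.
  move=> a b; have -> : P x a b = (P x *m (delta_mx b 0 : 'cV[R]_n)) a 0 by rewrite -colE mxE.
  apply: le_trans (entry_le_enorm _ a 0) _; rewrite -(enorm_delta R b).
  exact: proj_le (hP x).
apply: spec_le => j k; rewrite mxE.
apply: le_trans; first exact: ler_norm_sum.
apply: (@le_trans _ _ (\sum_(b < n) (n%:R * B))); last first.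
  by rewrite sumr_const card_ord natrM -mulrA [X in _ <= X]mulr_natl.
apply: ler_sum => b _; rewrite normrM -[X in _ <= X]mulr1.
apply: ler_pM => //.
rewrite mxE; apply: le_trans; first exact: ler_norm_sum.
apply: (@le_trans _ _ (\sum_(a < n) B)); last by rewrite sumr_const card_ord mulr_natl.
apply: ler_sum => a _; rewrite normrM mxE -[X in _ <= X]mul1r.
by apply: ler_pM => //; exact: Mb.
Qed.
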